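(* If $\mathbb{k}$ contains a primitive $2k$-th root of unity, then $\mathrm{Cl}_q(n,k)$ is semisimple; in fact $\mathrm{Cl}_q(n,k)$ is isomorphic as a $\mathbb{k}$-algebra to a direct sum of $(2k)^n$ copies of the matrix algebra $\mathrm{Mat}_{2^n}(\mathbb{k})$.
   Context: Let $\mathbb{k}$ be a field of characteristic different from $2$, let $q\in\mathbb{k}^\times$, and let $n,k$ be positive integers. The quantum Clifford algebra $\mathrm{Cl}_q(n,k)$ is the unital associative $\mathbb{k}$-algebra generated by $\psi_a,\psi_a^*,\omega_a,\omega_a^{-1}$ for $a\in\{1,\dots,n\}$, subject to the relations (for all $a,b\in\{1,\dots,n\}$): $\omega_a\omega_b=\omega_b\omega_a$; $\omega_a\omega_a^{-1}=1$; $\omega_a\psi_b=q^{\delta_{ab}}\psi_b\omega_a$; $\omega_a\psi_b^*=q^{-\delta_{ab}}\psi_b^*\omega_a$; $\psi_a\psi_b+\psi_b\psi_a=0$; $\psi_a^*\psi_b^*+\psi_b^*\psi_a^*=0$; $\psi_a\psi_a^*+q^k\psi_a^*\psi_a=\omega_a^{-k}$; $\psi_a\psi_a^*+q^{-k}\psi_a^*\psi_a=\omega_a^{k}$; and $\psi_a\psi_b^*+\psi_b^*\psi_a=0$ if $a\neq b$. *)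

(* Defs.v *)
From HB Require Import structures.
From mathcomp Require Import all_boot all_order all_algebra.
Set Implicit Arguments. Unset Strict Implicit. Unset Printing Implicit Defensive.
Import Order.TTheory GRing.Theory Num.Theory.
Local Open Scope ring_scope.

(* Defining relations of the quantum Clifford algebra Cl_q(n,k), for a
   family of elements psi, psis (= psi-star), om (= omega), omi (= omega^{-1})
   of an F-algebra B, indexed by 'I_n. *)
Definition clq_rels (F : fieldType) (q : F) (n k : nat) (B : algType F)
    (psi psis om omi : 'I_n -> B) : Prop :=
  (forall a b, om a * om b = om b * om a)
  /\       (forall a, om a * omi a = 1 /\ omi a * om a = 1)
  /\       (forall a b, om a * psi b = (if a == b then q else 1) *: (psi b * om a))
  /\       (forall a b, om a * psis b = (if a == b then q^-1 else 1) *: (psis b * om a))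
  /\       (forall a b, psi a * psi b + psi b * psi a = 0)
  /\       (forall a b, psis a * psis b + psis b * psis a = 0)
  /\       (forall a, psi a * psis a + q ^+ k *: (psis a * psi a) = omi a ^+ k)
  /\       (forall a, psi a * psis a + (q ^+ k)^-1 *: (psis a * psi a) = om a ^+ k)
  /\       (forall a b, a != b -> psi a * psis b + psis b * psi a = 0).

Definition is_alg_hom (F : fieldType) (A B : algType F) (f : A -> B) : Prop :=
  [/\ (forall x y, f (x + y) = f x + f y),
      (forall (c : F) x, f (c *: x) = c *: f x),
      (forall x y, f (x * y) = f x * f y) & f 1 = 1].

(* (A, psi, psis, om, omi) is a presentation of Cl_q(n,k): the generators
   satisfy the relations and A has the universal property of the algebra
   defined by these generators and relations. *)
Definition is_Clq (F : fieldType) (q : F) (n k : nat) (A : algType F)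
    (psi psis om omi : 'I_n -> A) : Prop :=
  clq_rels q k psi psis om omi /\
  forall (B : algType F) (psi' psis' om' omi' : 'I_n -> B),
    clq_rels q k psi' psis' om' omi' ->
    (exists g : A -> B, is_alg_hom g /\
        forall a, [/\ g (psi a) = psi' a, g (psis a) = psis' a,
                      g (om a) = om' a & g (omi a) = omi' a]) /\
    (forall g1 g2 : A -> B, is_alg_hom g1 -> is_alg_hom g2 ->
       (forall a, [/\ g1 (psi a) = g2 (psi a), g1 (psis a) = g2 (psis a),
                      g1 (om a) = g2 (om a) & g1 (omi a) = g2 (omi a)]) ->
       forall x, g1 x = g2 x).

Definition is_left_ideal (R : nzRingType) (I : R -> Prop) : Prop :=
  [/\ I 0, (forall x y, I x -> I y -> I (x - y)) & (forall r x, I x -> I (r * x))].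

Definition semisimple_ring (R : nzRingType) : Prop :=
  forall I : R -> Prop, is_left_ideal I ->
    exists J : R -> Prop, [/\ is_left_ideal J,
      (forall x, I x -> J x -> x = 0) &
      (forall x, exists y z, [/\ I y, J z & x = y + z])].

(* A is isomorphic as an F-algebra to the direct sum (product) of m copies
   of Mat_d(F): there are algebra homomorphisms f_i : A -> Mat_d(F) (i < m)
   whose combination A -> Mat_d(F)^m is bijective. *)
Definition iso_to_sum_of_matrix_algebras (F : fieldType) (A : algType F)
    (m d : nat) : Prop :=
  exists f : 'I_m -> A -> 'M[F]_d,
    (forall i x y, f i (x + y) = f i x + f i y)
     /\         (forall i (c : F) x, f i (c *: x) = c *: f i x)
     /\         (forall i x y, f i (x * y) = f i x *m f i y)
     /\         (forall i, f i 1 = 1%:M)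
     /\         (forall x y, (forall i, f i x = f i y) -> x = y)
     /\         (forall M : 'I_m -> 'M[F]_d, exists x, forall i, f i x = M i).

(* Main.v *)
Require Import Defs.
From HB Require Import structures.
From mathcomp Require Import all_boot all_order all_algebra.
From mathcomp Require Import zify ring.
From Stdlib Require Import Classical ClassicalEpsilon.
Set Implicit Arguments. Unset Strict Implicit. Unset Printing Implicit Defensive.
Import Order.TTheory GRing.Theory Num.Theory.
Local Open Scope ring_scope.

Section Bits.
Variable n : nat.
Definition Bits := {ffun 'I_n -> bool}.
Definition bz : Bits := [ffun _ => false].
Definition bx (m s : Bits) : Bits := [ffun a => m a (+) s a].
Definition ea (a : 'I_n) : Bits := [ffun b => b == a].

Lemma bxE m s a : bx m s a = m a (+) s a. Proof. by rewrite ffunE. Qed.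
Lemma bxA m1 m2 s : bx m1 (bx m2 s) = bx (bx m1 m2) s.
Proof. by apply/ffunP => a; rewrite !ffunE addbA. Qed.
Lemma bx0l s : bx bz s = s. Proof. by apply/ffunP => a; rewrite !ffunE. Qed.
Lemma bx0r s : bx s bz = s. Proof. by apply/ffunP => a; rewrite !ffunE addbF. Qed.
Lemma bxC m s : bx m s = bx s m. Proof. by apply/ffunP => a; rewrite !ffunE addbC. Qed.
Lemma bxxx m : bx m m = bz. Proof. by apply/ffunP => a; rewrite !ffunE addbb. Qed.
Lemma bxK m s : bx m (bx m s) = s. Proof. by rewrite bxA bxxx bx0l. Qed.
Lemma eaE a b : ea a b = (b == a). Proof. by rewrite ffunE. Qed.

Lemma cardB_gt0 : (0 < #|{: Bits}|)%N.
Proof. by apply/card_gt0P; exists bz. Qed.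
Definition dd := #|{: Bits}|.-1.
Lemma cardB : #|{: Bits}| = dd.+1. Proof. by rewrite prednK // cardB_gt0. Qed.
Definition idx (i : 'I_dd.+1) : Bits := enum_val (cast_ord (esym cardB) i).
Definition rnk (s : Bits) : 'I_dd.+1 := cast_ord cardB (enum_rank s).
Lemma idxK : cancel idx rnk.
Proof. by move=> i; rewrite /idx /rnk enum_valK cast_ordKV. Qed.
Lemma rnkK : cancel rnk idx.
Proof. by move=> s; rewrite /idx /rnk cast_ordK enum_rankK. Qed.
Lemma idx_inj : injective idx. Proof. exact: can_inj idxK. Qed.
Lemma cardB2 : #|{: Bits}| = (2 ^ n)%N.
Proof. by rewrite card_ffun card_bool card_ord. Qed.
End Bits.

Section MM.
Variables (F : fieldType) (n : nat).
Local Notation D := (dd n).+1.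
Local Notation Bits := (Bits n).
Local Notation idx := (@idx n).
Local Notation rnk := (@rnk n).

Definition mm (m : Bits) (g : Bits -> F) : 'M[F]_D :=
  \matrix_(i, j) if idx i == bx m (idx j) then g (idx j) else 0.

Lemma mmM m1 g1 m2 g2 :
  mm m1 g1 * mm m2 g2 = mm (bx m1 m2) (fun t => g1 (bx m2 t) * g2 t).
Proof.
apply/matrixP => i j; rewrite !mxE (bigD1 (rnk (bx m2 (idx j)))) //= !mxE rnkK eqxx.
rewrite big1 ?addr0 => [|r /negbTE hr]; last first.
  rewrite !mxE; case: (idx r =P bx m2 (idx j)) => [e|]; last by rewrite mulr0.
  by move: hr; rewrite -e idxK eqxx.
by rewrite bxA; case: eqP; rewrite ?mul0r.
Qed.

Lemma mm_eq m1 m2 g1 g2 : m1 = m2 -> (forall t, g1 t = g2 t) -> mm m1 g1 = mm m2 g2.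
Proof. by move=> -> h; apply/matrixP => i j; rewrite !mxE h. Qed.
Lemma mmD m g1 g2 : mm m g1 + mm m g2 = mm m (fun t => g1 t + g2 t).
Proof. by apply/matrixP => i j; rewrite !mxE; case: eqP; rewrite ?addr0. Qed.
Lemma mmZ m g d : d *: mm m g = mm m (fun t => d * g t).
Proof. by apply/matrixP => i j; rewrite !mxE; case: eqP; rewrite ?mulr0. Qed.
Lemma mm0 m g : (forall t, g t = 0) -> mm m g = 0.
Proof. by move=> h; apply/matrixP => i j; rewrite !mxE h; case: eqP. Qed.
Lemma mm_scalar d : mm (bz n) (fun _ => d) = d%:M.
Proof.
apply/matrixP => i j; rewrite !mxE bx0l.
case: (i =P j) => [->|h]; rewrite ?eqxx ?mulr1 // (inj_eq (@idx_inj n)).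
by move/eqP: h => /negbTE ->.
Qed.
Lemma mm1 : mm (bz n) (fun _ => 1) = 1.
Proof. exact: mm_scalar. Qed.
Lemma mm_pow0 g j : (mm (bz n) g) ^+ j = mm (bz n) (fun t => g t ^+ j).
Proof.
elim: j => [|j IH]; first by rewrite expr0 -mm1; apply: mm_eq.
by rewrite exprS IH mmM bx0l; apply: mm_eq => // t; rewrite bx0l exprS.
Qed.
Lemma mm_prod0 (I : Type) (r : seq I) (gs : I -> Bits -> F) :
  \prod_(a <- r) mm (bz n) (gs a) = mm (bz n) (fun t => \prod_(a <- r) gs a t).
Proof.
elim: r => [|a r IH]; first by rewrite big_nil -mm1; apply: mm_eq => // t; rewrite big_nil.
by rewrite big_cons IH mmM bx0l; apply: mm_eq => // t; rewrite bx0l big_cons.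
Qed.
Lemma mm_prod (I : Type) (r : seq I) (ms : I -> Bits) (gs : I -> Bits -> F) :
  (forall a t, gs a t != 0) ->
  exists G : Bits -> F, (forall t, G t != 0) /\
  \prod_(a <- r) mm (ms a) (gs a) = mm [ffun b => \big[addb/false]_(a <- r) ms a b] G.
Proof.
move=> hg; elim: r => [|a r [G [hG e]]].
  exists (fun _ => 1); split=> [t|]; first exact: oner_neq0.
  by rewrite big_nil -mm1; apply: mm_eq => //; apply/ffunP => b; rewrite !ffunE big_nil.
exists (fun t => gs a (bx [ffun b => \big[addb/false]_(a <- r) ms a b] t) * G t).
split=> [t|]; first by rewrite mulf_neq0.
by rewrite big_cons e mmM; apply: mm_eq => //; apply/ffunP => b; rewrite !ffunE big_cons.
Qed.

(* Jordan-Wigner signs *)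
Definition sgn (a : 'I_n) (t : Bits) : F := \prod_(b < n | (b < a)%N) (if t b then -1 else 1).
Lemma sgn_sq a t : sgn a t * sgn a t = 1.
Proof.
rewrite /sgn -big_split big1 // => b _ /=; case: (t b); by rewrite ?mulrNN mulr1.
Qed.
Lemma sgn_ne0 a t : sgn a t != 0.
Proof. by apply/eqP => h; have := sgn_sq a t; rewrite h mul0r => /eqP; rewrite eq_sym oner_eq0. Qed.
Lemma sgn_self a t : sgn a (bx (ea a) t) = sgn a t.
Proof.
apply: eq_bigr => b hb; rewrite bxE eaE; suff -> : (b == a) = false by [].
by apply/negbTE; rewrite -val_eqE neq_ltn hb.
Qed.
Lemma sgn_flip a b t : a != b ->
  sgn a (bx (ea b) t) = (if (b < a)%N then -1 else 1) * sgn a t.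
Proof.
move=> ab; case: ifP => hba; last first.
  rewrite mul1r; apply: eq_bigr => c hc; rewrite bxE eaE.
  suff -> : (c == b) = false by [].
  by apply/negbTE; apply: contraFN hba => /eqP <-.
rewrite /sgn (bigD1 b) //= [in RHS](bigD1 b) //= bxE eaE eqxx /=.
rewrite mulrA; congr (_ * _).
  by case: (t b); rewrite ?mulrN1 ?mulr1 ?opprK.
apply: eq_bigr => c /andP [_ hc]; rewrite bxE eaE (negbTE hc).
by [].
Qed.
Lemma sgn_anti a b t : a != b ->
  sgn a (bx (ea b) t) * sgn b t + sgn b (bx (ea a) t) * sgn a t = 0.
Proof.
move=> ab; rewrite sgn_flip // sgn_flip 1?eq_sym //.
have [h|h|h] := ltngtP a b.
- ring.
- ring.
- by move: ab; rewrite -val_eqE /= h eqxx.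
Qed.

End MM.

Section Rep.
Variables (F : fieldType) (n k : nat) (q : F) (w : 'I_n -> F).
Hypotheses (Hq : q != 0) (Hw : forall a, w a != 0) (Hw2 : forall a, w a ^+ (2 * k) = 1).
Local Notation D := (dd n).+1.
Local Notation mm := (@mm F n).
Local Notation sgn := (@sgn F n).

Definition Psi a := mm (ea a) (fun t => if t a then w a ^+ k * sgn a t else 0).
Definition Psis a := mm (ea a) (fun t => if t a then 0 else sgn a t).
Definition Om a := mm (bz n) (fun t => if t a then w a / q else w a).
Definition Omi a := mm (bz n) (fun t => if t a then q / w a else (w a)^-1).

Lemma WW a : w a ^+ k * w a ^+ k = 1.
Proof. by rewrite -exprD addnn -mul2n Hw2. Qed.
Lemma Wne0 a : w a ^+ k != 0.
Proof. by rewrite expf_neq0. Qed.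
Lemma WV a : (w a ^+ k)^-1 = w a ^+ k.
Proof. by apply: (mulIf (Wne0 a)); rewrite mulVf ?Wne0 // WW. Qed.

Lemma rep_rels : clq_rels q k Psi Psis Om Omi.
Proof.
split; [|split; [|split; [|split; [|split; [|split; [|split; [|split]]]]]]].
- move=> a b; rewrite /Om !mmM; apply: mm_eq => // t; rewrite !bx0l; ring.
- move=> a; rewrite /Om /Omi !mmM -mm1 bx0l; split; apply: mm_eq => // t;
    rewrite bx0l; case: (t a); field; by rewrite ?Hw ?Hq.
- move=> a b; rewrite /Om /Psi !mmM mmZ bx0l bx0r; apply: mm_eq => // t.
  rewrite bx0l bxE eaE; case: (a =P b) => [<-|/eqP ab] /=.
    by case: (t a) => /=; [field|ring].
  by case: (t a); case: (t b); ring.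
- move=> a b; rewrite /Om /Psis !mmM mmZ bx0l bx0r; apply: mm_eq => // t.
  rewrite bx0l bxE eaE; case: (a =P b) => [<-|/eqP ab] /=.
    by case: (t a) => /=; [ring|field].
  by case: (t a); case: (t b); ring.
- move=> a b; rewrite /Psi !mmM (bxC (ea b)) mmD; apply: mm0 => t.
  rewrite !bxE !eaE; case: (a =P b) => [<-|/eqP ab] /=.
    by rewrite eqxx; case: (t a); rewrite /= ?mulr0 ?mul0r ?addr0.
  rewrite eq_sym (negbTE ab) /=.
  case: (t a); case: (t b); rewrite ?mulr0 ?mul0r ?addr0 //.
  have h := @sgn_anti F n a b t ab.
  rewrite [LHS](_ : _ = w a ^+ k * w b ^+ k * (sgn a (bx (ea b) t) * sgn b t
    + sgn b (bx (ea a) t) * sgn a t)); first by rewrite h mulr0.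
  ring.
- move=> a b; rewrite /Psis !mmM (bxC (ea b)) mmD; apply: mm0 => t.
  rewrite !bxE !eaE; case: (a =P b) => [<-|/eqP ab] /=.
    by rewrite eqxx; case: (t a); rewrite /= ?mulr0 ?mul0r ?addr0.
  rewrite eq_sym (negbTE ab) /=.
  case: (t a); case: (t b); rewrite ?mulr0 ?mul0r ?addr0 //.
  exact: (@sgn_anti F n a b t ab).
- move=> a; rewrite /Psi /Psis /Omi !mmM mmZ mmD bxxx mm_pow0; apply: mm_eq => // t.
  rewrite !bxE !eaE eqxx /= !sgn_self.
  case: (t a) => /=; rewrite ?mulr0 ?mul0r ?add0r ?addr0.
    by rewrite expr_div_n [sgn a t * _]mulrC -mulrA sgn_sq mulr1 WV.
  by rewrite -mulrA sgn_sq mulr1 exprVn WV.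
- move=> a; rewrite /Psi /Psis /Om !mmM mmZ mmD bxxx mm_pow0; apply: mm_eq => // t.
  rewrite !bxE !eaE eqxx /= !sgn_self.
  case: (t a) => /=; rewrite ?mulr0 ?mul0r ?add0r ?addr0.
    by rewrite expr_div_n [sgn a t * _]mulrC -mulrA sgn_sq mulr1 mulrC.
  by rewrite -mulrA sgn_sq mulr1.
- move=> a b ab; rewrite /Psi /Psis !mmM (bxC (ea b)) mmD; apply: mm0 => t.
  rewrite !bxE !eaE (negbTE ab) eq_sym (negbTE ab) /=.
  case: (t a); case: (t b); rewrite ?mulr0 ?mul0r ?addr0 ?add0r //.
  have h := @sgn_anti F n a b t ab.
  rewrite [LHS](_ : _ = w a ^+ k * (sgn a (bx (ea b) t) * sgn b t
    + sgn b (bx (ea a) t) * sgn a t)); first by rewrite h mulr0.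
  ring.
Qed.
Lemma PsiPsis a : Psi a * Psis a = mm (bz n) (fun t => if t a then 0 else w a ^+ k).
Proof.
rewrite /Psi /Psis mmM bxxx; apply: mm_eq => // t.
rewrite bxE eaE eqxx sgn_self; case: (t a) => /=; first by rewrite mulr0.
by rewrite -mulrA sgn_sq mulr1.
Qed.
Lemma PsisPsi a : Psis a * Psi a = mm (bz n) (fun t => if t a then w a ^+ k else 0).
Proof.
rewrite /Psi /Psis mmM bxxx; apply: mm_eq => // t.
rewrite bxE eaE eqxx sgn_self; case: (t a) => /=; last by rewrite mul0r.
by rewrite mulrCA sgn_sq mulr1.
Qed.
Lemma E0m a : (Psi a * Psis a) * (Psi a * Psis a) = mm (bz n) (fun t => if t a then 0 else 1).
Proof.
rewrite PsiPsis mmM bx0l; apply: mm_eq => // t; rewrite bx0l.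
by case: (t a); rewrite ?mulr0 ?WW.
Qed.
Lemma E1m a : (Psis a * Psi a) * (Psis a * Psi a) = mm (bz n) (fun t => if t a then 1 else 0).
Proof.
rewrite PsisPsi mmM bx0l; apply: mm_eq => // t; rewrite bx0l.
by case: (t a); rewrite ?mulr0 ?WW.
Qed.
Lemma Zm a : (Psi a * Psis a) * (Psi a * Psis a) * Om a
  + q *: ((Psis a * Psi a) * (Psis a * Psi a) * Om a) = (w a)%:M.
Proof.
rewrite E0m E1m /Om !mmM bx0l mmZ mmD -mm_scalar; apply: mm_eq => // t.
rewrite !bx0l; case: (t a); rewrite ?mul0r ?mulr0 ?add0r ?addr0 ?mul1r //.
by field.
Qed.
Lemma PPs a : Psi a + Psis a = mm (ea a) (fun t => if t a then w a ^+ k * sgn a t else sgn a t).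
Proof. by rewrite /Psi /Psis mmD; apply: mm_eq => // t; case: (t a); rewrite ?addr0 ?add0r. Qed.

Lemma Ym (s t : Bits n) : exists G : Bits n -> F, (forall x, G x != 0) /\
  \prod_(a < n) (if s a != t a then Psi a + Psis a else 1) = mm (bx s t) G.
Proof.
have [|G [hG e]] := @mm_prod F n _ (index_enum 'I_n)
  (fun a => if s a != t a then ea a else bz n)
  (fun a => if s a != t a then (fun x : Bits n => if x a then w a ^+ k * sgn a x else sgn a x)
            else (fun _ => 1)).
  move=> a x; case: (s a != t a); last exact: oner_neq0.
  by case: (x a); rewrite ?mulf_neq0 ?Wne0 ?sgn_ne0.
exists G; split => //.
rewrite (eq_bigr (fun a => mm (if s a != t a then ea a else bz n)
  (if s a != t a then (fun x : Bits n => if x a then w a ^+ k * sgn a x else sgn a x)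
   else (fun _ => 1)))); last first.
  move=> a _; case: ifP => _; first exact: PPs.
  by rewrite mm1.
rewrite e; apply: mm_eq => //; apply/ffunP => b; rewrite !ffunE (bigD1 b) //= big1.
  by rewrite addbF; case: ifP; rewrite ?ffunE ?eqxx; case: (s b); case: (t b).
by move=> a hab; case: ifP => _; rewrite ffunE // eq_sym (negbTE hab).
Qed.

End Rep.

Section Images.
Variables (F : fieldType) (n : nat).
Local Notation D := (dd n).+1.
Local Notation mm := (@mm F n).

Lemma prod_ind_eq (s : Bits n) :
  \prod_(a < n) mm (bz n) (fun t => if s a then (if t a then 1 else 0) else (if t a then 0 else 1))
  = mm (bz n) (fun t => (t == s)%:R).
Proof.
rewrite mm_prod0; apply: mm_eq => // t.
case: (t =P s) => [->|h].
  by rewrite big1 // => a _; case: (s a).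
case/boolP: [exists a, t a != s a] => [/existsP [a ha]|/existsPn H]; last first.
  by exfalso; apply: h; apply/ffunP => a; apply/eqP; move: (H a); rewrite negbK.
rewrite (bigD1 a) //=; suff -> : (if s a then (if t a then 1 else 0) else (if t a then 0 else 1)) = 0 :> F.
  by rewrite mul0r.
by move: ha; case: (s a); case: (t a).
Qed.

Lemma bxst (s t : Bits n) : bx (bx s t) t = s.
Proof. by rewrite -bxA bxxx bx0r. Qed.
Lemma idx_eq (i : 'I_D) (s : Bits n) : (idx i == s) = (i == rnk s).
Proof. by apply/eqP/eqP => [<-|->]; rewrite ?idxK ?rnkK. Qed.

Lemma corner (s t : Bits n) (G : Bits n -> F) :
  mm (bz n) (fun x => (x == s)%:R) * mm (bx s t) G * mm (bz n) (fun x => (x == t)%:R)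
  = G t *: delta_mx (rnk s) (rnk t).
Proof.
rewrite !mmM bx0l bx0r; apply/matrixP => i j; rewrite !mxE !bx0l.
case: (idx j =P t) => [ej|nj]; last first.
  rewrite mulr0; have -> : (j == rnk t) = false.
    by apply/negbTE/eqP => e; apply: nj; rewrite e rnkK.
  by rewrite andbF mulr0; case: ifP.
rewrite ej bxst eqxx mulr1 idx_eq (_ : j == rnk t) ?andbT; last by rewrite -idx_eq ej.
by case: (i == rnk s); rewrite ?eqxx ?mul1r ?mulr1 ?mulr0.
Qed.
End Images.

Section Ideals.
Variable R : nzRingType.

Lemma li_add (I : R -> Prop) : is_left_ideal I -> forall x y, I x -> I y -> I (x + y).
Proof.
case=> I0 IB _ x y hx hy.
by have := IB x (0 - y) hx (IB 0 y I0 hy); rewrite sub0r opprK.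
Qed.

Lemma li_sum (I : R -> Prop) (J : Type) (r : seq J) (P : pred J) (G : J -> R) :
  is_left_ideal I -> (forall j, P j -> I (G j)) -> I (\sum_(j <- r | P j) G j).
Proof.
move=> hI hG; apply: (big_ind I) => //; first by case: hI.
exact: li_add.
Qed.

Lemma semisimple_of_idem :
  (forall I : R -> Prop, is_left_ideal I -> exists e, I e /\ forall x, I x -> x * e = x) ->
  semisimple_ring R.
Proof.
move=> H I hI; have [e [Ie He]] := H I hI.
have ee : e * e = e by apply: He.
exists (fun x => x * e = 0); split.
- split; first by rewrite mul0r.
  + by move=> x y hx hy; rewrite mulrBl hx hy subr0.
  + by move=> r x hx; rewrite -mulrA hx mulr0.
- by move=> x hx hJ; rewrite -(He x hx) hJ.
- move=> x; exists (x * e), (x - x * e); split.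
  + by case: hI => _ _; apply.
  + by rewrite mulrBl -mulrA ee subrr.
  + by rewrite addrC subrK.
Qed.
End Ideals.

Section MxIdeal.
Variables (F : fieldType) (d : nat).
Local Notation D := d.+1.

Definition decP (P : Prop) : bool := if excluded_middle_informative P then true else false.
Lemma decPP P : reflect P (decP P).
Proof. by rewrite /decP; case: excluded_middle_informative => h; constructor. Qed.

Lemma mx_ideal_idem (I : 'M[F]_D -> Prop) : is_left_ideal I ->
  exists e, I e /\ forall M, I M -> M * e = M.
Proof.
move=> hI; have [I0 IB IM] := hI.
pose pr r := decP (exists M, I M /\ \rank M = r).
have ex : exists r, pr r by exists 0%N; apply/decPP; exists 0; rewrite mxrank0.
have le : forall r, pr r -> (r <= D)%N.
  by move=> r /decPP [M [_ <-]]; apply: rank_leq_row.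
case: (ex_maxnP ex le) => r /decPP [M0 [IM0 rM0]] rmax.
have sub : forall N, I N -> (N <= M0)%MS.
  move=> N IN.
  pose S := (M0 + N)%MS.
  have IS : I S.
    have /sub_addsmxP [u e] : (S <= M0 + N)%MS by apply: submx_refl.
    by rewrite e; apply: (li_add hI); apply: IM.
  have rS : (\rank S <= r)%N by apply: rmax; apply/decPP; exists S.
  have M0S : (M0 <= S)%MS by apply: addsmxSl.
  have SM0 : (S <= M0)%MS.
    by have [_ <-] := mxrank_leqif_sup M0S; rewrite eqn_leq rM0 rS andbT -{1}rM0 mxrankS.
  by apply: submx_trans SM0; apply: addsmxSr.
pose e := proj_mx M0 M0^C%MS.
exists e; split.
  have : (1%:M *m e <= M0)%MS by apply: proj_mx_sub.
  by rewrite mul1mx => /submxP [X ->]; apply: IM.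
by move=> M IMM; apply: proj_mx_id; [apply: capmx_compl|apply: sub].
Qed.
End MxIdeal.

Section Transfer.
Variables (F : fieldType) (A : algType F) (C : finType) (d : nat)
  (f : C -> A -> 'M[F]_d.+1).
Hypotheses (hf : forall c, is_alg_hom (f c))
  (finj : forall x y, (forall c, f c x = f c y) -> x = y)
  (fsurj : forall M : C -> 'M[F]_d.+1, exists x, forall c, f c x = M c).

Lemma fB c x y : f c (x - y) = f c x - f c y.
Proof.
case: (hf c) => fD fZ _ _.
by rewrite -scaleN1r fD fZ scaleN1r.
Qed.
Lemma f0 c : f c 0 = 0.
Proof. by rewrite -(subrr 0) fB subrr. Qed.

Lemma semisimple_transfer : semisimple_ring A.
Proof.
apply: semisimple_of_idem => I hI; have [I0 IB IM] := hI.
pose I' c := fun M => exists x, I x /\ f c x = M.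
have hI' : forall c, is_left_ideal (I' c).
  move=> c; split.
  - by exists 0; split => //; rewrite f0.
  - by move=> _ _ [x [hx <-]] [y [hy <-]]; exists (x - y); split; [apply: IB|rewrite fB].
  - move=> r _ [x [hx <-]]; have [r' hr'] := fsurj (fun _ => r).
    exists (r' * x); split; first by apply: IM.
    by case: (hf c) => _ _ -> _; rewrite hr'.
have hE : forall c, exists x, I x /\ forall M, I' c M -> M * f c x = M.
  move=> c; have [e [[x [hx <-]] he]] := mx_ideal_idem (hI' c).
  by exists x.
pose xe c := proj1_sig (constructive_indefinite_description _ (hE c)).
have hxe : forall c, I (xe c) /\ forall M, I' c M -> M * f c (xe c) = M.
  by move=> c; rewrite /xe; case: constructive_indefinite_description.
have heps : forall c, exists x, forall c', f c' x = if c' == c then 1 else 0.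
  by move=> c; apply: (fsurj (fun c' => if c' == c then 1 else 0)).
pose eps c := proj1_sig (constructive_indefinite_description _ (heps c)).
have hepsE : forall c c', f c' (eps c) = if c' == c then 1 else 0.
  by move=> c; rewrite /eps; case: constructive_indefinite_description.
exists (\sum_c eps c * xe c); split.
  by apply: li_sum => // c _; apply: IM; case: (hxe c).
move=> x hx; apply: finj => c.
have fsum : forall (r : seq C) (G : C -> A), f c (\sum_(j <- r) G j) = \sum_(j <- r) f c (G j).
  move=> r G; elim: r => [|j r IH]; first by rewrite !big_nil f0.
  by rewrite !big_cons; case: (hf c) => -> _ _ _; rewrite IH.
case: (hf c) => _ _ fM _.
rewrite fM fsum (bigD1 c) //= big1 ?addr0; last first.
  by move=> c' ne; rewrite fM hepsE eq_sym (negbTE ne) mul0r.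
rewrite fM hepsE eqxx mul1r.
by case: (hxe c) => _ -> //; exists x.
Qed.
End Transfer.

Section SubAlg.
Variables (F : fieldType) (A : algType F) (L : A -> Prop).
Hypotheses (L1 : L 1) (LD : forall x y, L x -> L y -> L (x + y))
  (LZ : forall (c : F) x, L x -> L (c *: x)) (LM : forall x y, L x -> L y -> L (x * y)).

Definition Lb (x : A) : bool := if excluded_middle_informative (L x) then true else false.
Lemma LbP x : reflect (L x) (Lb x).
Proof. rewrite /Lb; case: excluded_middle_informative => h; constructor => //. Qed.

Lemma Lb_closed : GRing.subsemialg_closed Lb.
Proof.
split; first by apply/LbP.
- split; first by apply/LbP; have := LZ 0 L1; rewrite scale0r.
  by move=> x y /LbP hx /LbP hy; apply/LbP; apply: LD.
- by move=> c x /LbP hx; apply/LbP; apply: LZ.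
- by move=> x y /LbP hx /LbP hy; apply/LbP; apply: LM.
Qed.

HB.instance Definition _ := GRing.isSubalgClosed.Build F A Lb Lb_closed.
Record subA := SubA { subval : A; _ : Lb subval }.
HB.instance Definition _ := [isSub for subval].
HB.instance Definition _ := [Choice of subA by <:].
HB.instance Definition _ := [SubChoice_isSubAlgebra of subA by <:].

Lemma subvalD (x y : subA) : subval (x + y) = subval x + subval y. Proof. by []. Qed.
Lemma subvalZ c (x : subA) : subval (c *: x) = c *: subval x. Proof. by []. Qed.
Lemma subvalM (x y : subA) : subval (x * y) = subval x * subval y. Proof. by []. Qed.
Lemma subval1 : subval (1 : subA) = 1. Proof. by []. Qed.
Lemma subval0 : subval (0 : subA) = 0. Proof. by []. Qed.

Variables (q : F) (n k : nat) (psi psis om omi : 'I_n -> A).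
Hypothesis HA : is_Clq q k psi psis om omi.
Hypotheses (Lpsi : forall a, L (psi a)) (Lpsis : forall a, L (psis a))
  (Lom : forall a, L (om a)) (Lomi : forall a, L (omi a)).

Lemma clq_ind x : L x.
Proof.
case: HA => R U.
pose psi' a := SubA (introT (LbP _) (Lpsi a)).
pose psis' a := SubA (introT (LbP _) (Lpsis a)).
pose om' a := SubA (introT (LbP _) (Lom a)).
pose omi' a := SubA (introT (LbP _) (Lomi a)).
have R' : clq_rels q k psi' psis' om' omi'.
  have vX (y : subA) m : subval (y ^+ m) = subval y ^+ m.
    by elim: m => [|m IH]; rewrite ?expr0 // !exprS subvalM IH.
  case: R => [r1 [r2 [r3 [r4 [r5 [r6 [r7 [r8 r9]]]]]]]].
  split; [|split; [|split; [|split; [|split; [|split; [|split; [|split]]]]]]].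
  - by move=> a b; apply: val_inj => /=; rewrite r1.
  - by move=> a; case: (r2 a) => h1 h2; split; apply: val_inj => /=.
  - by move=> a b; apply: val_inj => /=; rewrite r3.
  - by move=> a b; apply: val_inj => /=; rewrite r4.
  - by move=> a b; apply: val_inj => /=; rewrite r5.
  - by move=> a b; apply: val_inj => /=; rewrite r6.
  - by move=> a; apply: val_inj => /=; rewrite vX r7.
  - by move=> a; apply: val_inj => /=; rewrite vX r8.
  - by move=> a b ab; apply: val_inj => /=; rewrite r9.
have [[g [[gD gZ gM g1] gg]] _] := U _ _ _ _ _ R'.
have [_ uniq] := U _ _ _ _ _ R.
have -> : x = subval (g x).
  apply: (uniq id (fun y => subval (g y))).
  - by [].
  - by split=> [y z|c y|y z|]; rewrite ?gD ?gZ ?gM ?g1.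
  - by move=> a; case: (gg a) => -> -> -> ->.
by apply/LbP; case: (g x).
Qed.
End SubAlg.

Section Hom.
Variables (F : fieldType) (A B : algType F) (f : A -> B).
Hypothesis hf : is_alg_hom f.
Lemma hD x y : f (x + y) = f x + f y. Proof. by case: hf. Qed.
Lemma hZ c x : f (c *: x) = c *: f x. Proof. by case: hf. Qed.
Lemma hM x y : f (x * y) = f x * f y. Proof. by case: hf. Qed.
Lemma h1 : f 1 = 1. Proof. by case: hf. Qed.
Lemma h0 : f 0 = 0. Proof. by rewrite -(scale0r 0) hZ scale0r. Qed.
Lemma hB x y : f (x - y) = f x - f y.
Proof. by rewrite -scaleN1r hD hZ scaleN1r. Qed.
Lemma hsum (I : Type) (r : seq I) (P : pred I) (G : I -> A) :
  f (\sum_(i <- r | P i) G i) = \sum_(i <- r | P i) f (G i).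
Proof. exact: (big_morph f hD h0). Qed.
Lemma hprod (I : Type) (r : seq I) (P : pred I) (G : I -> A) :
  f (\prod_(i <- r | P i) G i) = \prod_(i <- r | P i) f (G i).
Proof. exact: (big_morph f hM h1). Qed.
End Hom.

Section SC.
Variables (F : fieldType) (A : algType F).
Definition SC (g x : A) (s : F) := g * x = s *: (x * g).

Lemma SC_mul g x y s t : SC g x s -> SC g y t -> SC g (x * y) (s * t).
Proof.
rewrite /SC => hx hy; rewrite mulrA hx -scalerAl -(mulrA x g y) hy scalerAr scalerA.
by rewrite -scalerAr mulrA.
Qed.

Lemma SC_1 g : SC g 1 1.
Proof. by rewrite /SC scale1r mulr1 mul1r. Qed.

Lemma SC_exp g x s j : SC g x s -> SC g (x ^+ j) (s ^+ j).
Proof.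
move=> h; elim: j => [|j IH]; first by rewrite !expr0; apply: SC_1.
by rewrite !exprS; apply: SC_mul.
Qed.

Lemma SC_Z g x s d : SC g x s -> SC g (d *: x) s.
Proof. by rewrite /SC => h; rewrite -scalerAl -scalerAr h scalerA mulrC -scalerA. Qed.

Lemma SC_inv g gi x s : g * gi = 1 -> gi * g = 1 -> s != 0 -> SC g x s -> SC gi x s^-1.
Proof.
rewrite /SC => h1 h2 s0 h.
have e : x * g = s^-1 *: (g * x) by rewrite h scalerA mulVf // scale1r.
rewrite -[gi * x]mulr1 -h1 mulrA -(mulrA gi) e -scalerAr -scalerAl mulrA h2 mul1r.
by [].
Qed.

Lemma SC_left g x s j : SC g x s -> SC (g ^+ j) x (s ^+ j).
Proof.
move=> h; elim: j => [|j IH]; first by rewrite /SC !expr0 mul1r mulr1 scale1r.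
rewrite /SC in IH *; rewrite !exprSr -mulrA h -scalerAr. rewrite (mulrA (g ^+ j)) IH -scalerAl scalerA -mulrA mulrC.
by []. Qed.
End SC.

Section Alg.
Variables (F : fieldType) (q : F) (n k : nat) (A : algType F)
  (psi psis om omi : 'I_n -> A).
Hypotheses (Hrel : clq_rels q k psi psis om omi) (H2 : (2%:R : F) != 0)
  (Hq : q != 0) (Hk : (0 < k)%N).

Let c := q ^+ k.
Lemma c0 : c != 0. Proof. by rewrite expf_neq0. Qed.

Lemma r_omom a b : om a * om b = om b * om a. Proof. by case: Hrel. Qed.
Lemma r_omK a : om a * omi a = 1. Proof. by case: Hrel => _ [/(_ a) [-> _]]. Qed.
Lemma r_omiK a : omi a * om a = 1. Proof. by case: Hrel => _ [/(_ a) [_ ->]]. Qed.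
Lemma r_ompsi a b : om a * psi b = (if a == b then q else 1) *: (psi b * om a).
Proof. by case: Hrel => _ [_ [->]]. Qed.
Lemma r_ompsis a b : om a * psis b = (if a == b then q^-1 else 1) *: (psis b * om a).
Proof. by case: Hrel => _ [_ [_ [->]]]. Qed.
Lemma r_pp a b : psi a * psi b + psi b * psi a = 0.
Proof. by case: Hrel => _ [_ [_ [_ [->]]]]. Qed.
Lemma r_qq a b : psis a * psis b + psis b * psis a = 0.
Proof. by case: Hrel => _ [_ [_ [_ [_ [->]]]]]. Qed.
Lemma r_7 a : psi a * psis a + c *: (psis a * psi a) = omi a ^+ k.
Proof. by case: Hrel => _ [_ [_ [_ [_ [_ [->]]]]]]. Qed.
Lemma r_8 a : psi a * psis a + c^-1 *: (psis a * psi a) = om a ^+ k.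
Proof. by case: Hrel => _ [_ [_ [_ [_ [_ [_ [->]]]]]]]. Qed.
Lemma r_pq a b : a != b -> psi a * psis b + psis b * psi a = 0.
Proof. by move=> ab; case: Hrel => _ [_ [_ [_ [_ [_ [_ [_ /(_ a b ab)]]]]]]]. Qed.

Lemma twice0 (x : A) : x + x = 0 -> x = 0.
Proof.
move=> h; have : (2%:R : F) *: x = 0 by rewrite scaler_nat mulr2n.
by move/eqP; rewrite scaler_eq0 (negbTE H2) /= => /eqP.
Qed.

Lemma PP a : psi a * psi a = 0. Proof. exact/twice0/r_pp. Qed.
Lemma QQ a : psis a * psis a = 0. Proof. exact/twice0/r_qq. Qed.

Definition u a := psi a * psis a.
Definition v a := psis a * psi a.
Definition e0 a := u a * u a.
Definition e1 a := v a * v a.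
Definition y a := om a ^+ k.
Definition yi a := omi a ^+ k.

Lemma uv a : u a * v a = 0.
Proof. by rewrite /u /v mulrA -(mulrA (psi a)) QQ mulr0 mul0r. Qed.
Lemma vu a : v a * u a = 0.
Proof. by rewrite /u /v mulrA -(mulrA (psis a)) PP mulr0 mul0r. Qed.
Lemma Pu a : psi a * u a = 0. Proof. by rewrite /u mulrA PP mul0r. Qed.
Lemma Qv a : psis a * v a = 0. Proof. by rewrite /v mulrA QQ mul0r. Qed.

Lemma yu a : y a * u a = e0 a.
Proof. by rewrite /y -r_8 mulrDl -scalerAl vu scaler0 addr0. Qed.
Lemma yiu a : yi a * u a = e0 a.
Proof. by rewrite /yi -r_7 mulrDl -scalerAl vu scaler0 addr0. Qed.
Lemma yv a : y a * v a = c^-1 *: e1 a.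
Proof. by rewrite /y -r_8 mulrDl -scalerAl uv add0r. Qed.
Lemma yiv a : yi a * v a = c *: e1 a.
Proof. by rewrite /yi -r_7 mulrDl -scalerAl uv add0r. Qed.
Lemma y_yi a : y a * yi a = 1.
Proof.
by rewrite /y /yi -exprMn_comm ?r_omK ?expr1n // /GRing.comm r_omK r_omiK.
Qed.
Lemma u_eq a : u a = y a * e0 a.
Proof. by rewrite -yiu mulrA y_yi mul1r. Qed.
Lemma v_eq a : v a = c *: (y a * e1 a).
Proof. by rewrite scalerAr -yiv mulrA y_yi mul1r. Qed.
Lemma one_e a : 1 = e0 a + e1 a.
Proof.
rewrite -(y_yi a) /yi -r_7 mulrDr yu -scalerAr yv scalerA mulfV ?c0 //.
by rewrite scale1r.
Qed.
Lemma Pe0 a : psi a * e0 a = 0. Proof. by rewrite /e0 mulrA Pu mul0r. Qed.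
Lemma Qe1 a : psis a * e1 a = 0. Proof. by rewrite /e1 mulrA Qv mul0r. Qed.
Lemma Pe1 a : psi a * e1 a = psi a.
Proof. by rewrite -{2}[psi a]mulr1 (one_e a) mulrDr Pe0 add0r. Qed.
Lemma Qe0 a : psis a * e0 a = psis a.
Proof. by rewrite -{2}[psis a]mulr1 (one_e a) mulrDr Qe1 addr0. Qed.

Lemma SC_om_psi a : SC (om a) (psi a) q.
Proof. by rewrite /SC r_ompsi eqxx. Qed.
Lemma SC_om_psis a : SC (om a) (psis a) q^-1.
Proof. by rewrite /SC r_ompsis eqxx. Qed.
Lemma SC_om_u a : SC (om a) (u a) 1.
Proof. by rewrite -(mulfV Hq); apply: SC_mul; [apply: SC_om_psi|apply: SC_om_psis]. Qed.
Lemma SC_om_v a : SC (om a) (v a) 1.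
Proof. by rewrite -(mulVf Hq); apply: SC_mul; [apply: SC_om_psis|apply: SC_om_psi]. Qed.
Lemma SC_om_e0 a : SC (om a) (e0 a) 1.
Proof. by rewrite -(mulr1 1); apply: SC_mul; apply: SC_om_u. Qed.
Lemma SC_om_e1 a : SC (om a) (e1 a) 1.
Proof. by rewrite -(mulr1 1); apply: SC_mul; apply: SC_om_v. Qed.

Lemma comm_omX_e0 a j : om a ^+ j * e0 a = e0 a * om a ^+ j.
Proof. by have := SC_left j (SC_om_e0 a); rewrite /SC expr1n scale1r. Qed.
Lemma comm_omX_e1 a j : om a ^+ j * e1 a = e1 a * om a ^+ j.
Proof. by have := SC_left j (SC_om_e1 a); rewrite /SC expr1n scale1r. Qed.

Lemma om2k a : om a ^+ (2 * k) = y a * y a.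
Proof. by rewrite mul2n -addnn exprD. Qed.

Lemma e0_om2k a : e0 a * om a ^+ (2 * k) = e0 a.
Proof. by rewrite -comm_omX_e0 om2k -mulrA -u_eq yu. Qed.
Lemma e1_om2k a : e1 a * om a ^+ (2 * k) = c^-2 *: e1 a.
Proof.
have h : y a * e1 a = c^-1 *: v a by rewrite v_eq scalerA mulVf ?c0 // scale1r.
by rewrite -comm_omX_e1 om2k -mulrA h -scalerAr yv scalerA -expr2 exprVn.
Qed.

Definition bas a (t : 'I_4) : A :=
  match val t with 0 => e0 a | 1 => psi a | 2 => psis a | _ => e1 a end.
Definition kap (t : 'I_4) : F :=
  match val t with 0 => 1 | 1 => c^-2 | 2 => 1 | _ => c^-2 end.

Lemma kap0 t : kap t != 0.
Proof.
by rewrite /kap; case: t => [[|[|[|[|]]]] ?] //=; rewrite ?oner_neq0 // invr_neq0 // expf_neq0 // c0.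
Qed.

Lemma bas_om2k a t : bas a t * om a ^+ (2 * k) = kap t *: bas a t.
Proof.
rewrite /bas /kap; case: t => [[|[|[|[|j]]]] ?] //=.
- by rewrite e0_om2k scale1r.
- by rewrite -Pe1 -mulrA e1_om2k -scalerAr.
- by rewrite -Qe0 -mulrA e0_om2k scale1r.
- by rewrite e1_om2k.
Qed.

Lemma bas0 a : bas a (@Ordinal 4 0 isT) = e0 a. Proof. by []. Qed.
Lemma bas1 a : bas a (@Ordinal 4 1 isT) = psi a. Proof. by []. Qed.
Lemma bas2 a : bas a (@Ordinal 4 2 isT) = psis a. Proof. by []. Qed.
Lemma bas3 a : bas a (@Ordinal 4 3 isT) = e1 a. Proof. by []. Qed.

Definition mono a (p : 'I_4 * 'I_(2 * k)) := bas a p.1 * om a ^+ p.2.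
Definition S1 a (x : A) :=
  exists cf : 'I_4 * 'I_(2 * k) -> F, x = \sum_p cf p *: mono a p.

Lemma S1_0 a : S1 a 0.
Proof. by exists (fun _ => 0); rewrite big1 // => p _; rewrite scale0r. Qed.
Lemma S1_D a x z : S1 a x -> S1 a z -> S1 a (x + z).
Proof.
move=> [c1 ->] [c2 ->]; exists (fun p => c1 p + c2 p).
by rewrite -big_split; apply: eq_bigr => p _; rewrite scalerDl.
Qed.
Lemma S1_Z a d x : S1 a x -> S1 a (d *: x).
Proof.
move=> [c1 ->]; exists (fun p => d * c1 p).
by rewrite scaler_sumr; apply: eq_bigr => p _; rewrite scalerA.
Qed.
Lemma S1_mono a p : S1 a (mono a p).
Proof.
exists (fun p' => if p' == p then 1 else 0).
rewrite (bigD1 p) //= eqxx scale1r big1 ?addr0 // => p' /negbTE ->.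
by rewrite scale0r.
Qed.

Lemma S1_basX a t j : S1 a (bas a t * om a ^+ j).
Proof.
elim/ltn_ind: j => j IH.
case: (ltnP j (2 * k)) => hj; first exact: (S1_mono a (t, Ordinal hj)).
rewrite -(subnKC hj) exprD mulrA bas_om2k -scalerAl; apply: S1_Z; apply: IH.
lia.
Qed.

Lemma S1_psi a p : S1 a (psi a * mono a p).
Proof.
case: p => [[[|[|[|[|t]]]] ht] j]; rewrite /mono /= mulrA.
- by rewrite Pe0 mul0r; apply: S1_0.
- by rewrite PP mul0r; apply: S1_0.
- rewrite -/(u a) u_eq /y comm_omX_e0 -mulrA -exprD -(bas0 a); exact: S1_basX.
- by rewrite Pe1 -(bas1 a); exact: S1_basX.
- by [].
Qed.

Lemma S1_psis a p : S1 a (psis a * mono a p).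
Proof.
case: p => [[[|[|[|[|t]]]] ht] j]; rewrite /mono /= mulrA.
- by rewrite Qe0 -(bas2 a); exact: S1_basX.
- rewrite -/(v a) v_eq /y comm_omX_e1 -scalerAl -mulrA -exprD -(bas3 a).
  by apply: S1_Z; exact: S1_basX.
- by rewrite QQ mul0r; apply: S1_0.
- by rewrite Qe1 mul0r; apply: S1_0.
- by [].
Qed.

Definition sg (t : 'I_4) : F :=
  match val t with 0 => 1 | 1 => q | 2 => q^-1 | _ => 1 end.

Lemma sg0 t : sg t != 0.
Proof.
by rewrite /sg; case: t => [[|[|[|[|]]]] ?] //=; rewrite ?oner_neq0 ?invr_neq0.
Qed.

Lemma SC_om_bas a t : SC (om a) (bas a t) (sg t).
Proof.
rewrite /sg /bas; case: t => [[|[|[|[|t]]]] ht] /=.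
- exact: SC_om_e0.
- exact: SC_om_psi.
- exact: SC_om_psis.
- exact: SC_om_e1.
- exact: SC_om_e1.
Qed.

Lemma S1_om a p : S1 a (om a * mono a p).
Proof.
case: p => t j; rewrite /mono /= mulrA SC_om_bas -scalerAl -mulrA -exprS.
by apply: S1_Z; apply: S1_basX.
Qed.

Lemma bas_omi a t : bas a t * omi a = (kap t)^-1 *: (bas a t * om a ^+ (2 * k).-1).
Proof.
have h2 : (2 * k = (2 * k).-1.+1)%N by rewrite prednK // muln_gt0.
have := bas_om2k a t; rewrite {1}h2 exprSr mulrA => /(congr1 (fun z => z * omi a)).
rewrite -mulrA r_omK mulr1 => ->.
by rewrite -scalerAl scalerA mulVf ?kap0 // scale1r.
Qed.

Lemma S1_omi a p : S1 a (omi a * mono a p).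
Proof.
case: p => t j; rewrite /mono /= mulrA.
have h := SC_inv (r_omK a) (r_omiK a) (sg0 t) (SC_om_bas a t).
rewrite h -scalerAl bas_omi -scalerAl -mulrA -exprD; apply: S1_Z; apply: S1_Z.
exact: S1_basX.
Qed.

Lemma SC_mono_gen g a s1 s2 s3 : SC g (psi a) s1 -> SC g (psis a) s2 ->
  SC g (om a) s3 -> forall p, exists s, SC g (mono a p) s.
Proof.
move=> h1 h2 h3 [t j]; rewrite /mono /=.
have hu : SC g (u a) (s1 * s2) by apply: SC_mul.
have hv : SC g (v a) (s2 * s1) by apply: SC_mul.
have hb : exists s, SC g (bas a t) s.
  rewrite /bas; case: t => [[|[|[|[|t]]]] ht] /=.
  - by eexists; apply: SC_mul; [apply: hu|apply: hu].
  - by eexists; apply: h1.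
  - by eexists; apply: h2.
  - by eexists; apply: SC_mul; [apply: hv|apply: hv].
  - by eexists; apply: SC_mul; [apply: hv|apply: hv].
case: hb => s hb; exists (s * s3 ^+ j); apply: SC_mul => //; exact: SC_exp.
Qed.

Lemma anti_SC (x z : A) : x * z + z * x = 0 -> SC x z (-1).
Proof. by move=> h; rewrite /SC scaleN1r; apply/eqP; rewrite -addr_eq0 h. Qed.
Lemma anti_SC' (x z : A) : z * x + x * z = 0 -> SC x z (-1).
Proof. by move=> h; apply: anti_SC; rewrite addrC. Qed.

Lemma SC_psi_cross b a : a != b -> forall p, exists s, SC (psi b) (mono a p) s.
Proof.
move=> ab; apply: (SC_mono_gen (s1:=-1) (s2:=-1) (s3:=1)).
- by apply: anti_SC; apply: r_pp.
- by apply: anti_SC; apply: r_pq; rewrite eq_sym.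
- by rewrite /SC r_ompsi (negbTE ab) !scale1r.
Qed.

Lemma SC_psis_cross b a : a != b -> forall p, exists s, SC (psis b) (mono a p) s.
Proof.
move=> ab; apply: (SC_mono_gen (s1:=-1) (s2:=-1) (s3:=1)).
- by apply: anti_SC'; apply: r_pq.
- by apply: anti_SC; apply: r_qq.
- by rewrite /SC r_ompsis (negbTE ab) !scale1r.
Qed.

Lemma SC_om_cross b a : a != b -> SC (om b) (psi a) 1 /\ SC (om b) (psis a) 1 /\
  SC (om b) (om a) 1.
Proof.
move=> ab; rewrite /SC r_ompsi r_ompsis r_omom eq_sym (negbTE ab) !scale1r.
by [].
Qed.

Lemma SC_omb_cross b a : a != b -> forall p, exists s, SC (om b) (mono a p) s.
Proof.
by move=> ab; case: (SC_om_cross ab) => h1 [h2 h3]; apply: SC_mono_gen h1 h2 h3.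
Qed.

Lemma SC_omib_cross b a : a != b -> forall p, exists s, SC (omi b) (mono a p) s.
Proof.
move=> ab; case: (SC_om_cross ab) => h1 [h2 h3].
have i1 : (1 : F) != 0 := oner_neq0 _.
by apply: (SC_mono_gen (SC_inv (r_omK b) (r_omiK b) i1 h1)
  (SC_inv (r_omK b) (r_omiK b) i1 h2) (SC_inv (r_omK b) (r_omiK b) i1 h3)).
Qed.

Definition Kt := {ffun 'I_n -> 'I_4 * 'I_(2 * k)}.
Definition T (t : Kt) : A := \prod_(a < n) mono a (t a).
Definition Sp (x : A) := exists cf : Kt -> F, x = \sum_t cf t *: T t.

Lemma Sp_0 : Sp 0.
Proof. by exists (fun _ => 0); rewrite big1 // => p _; rewrite scale0r. Qed.
Lemma Sp_D x z : Sp x -> Sp z -> Sp (x + z).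
Proof.
move=> [c1 ->] [c2 ->]; exists (fun p => c1 p + c2 p).
by rewrite -big_split; apply: eq_bigr => p _; rewrite scalerDl.
Qed.
Lemma Sp_Z d x : Sp x -> Sp (d *: x).
Proof.
move=> [c1 ->]; exists (fun p => d * c1 p).
by rewrite scaler_sumr; apply: eq_bigr => p _; rewrite scalerA.
Qed.
Lemma Sp_sum (I : Type) (r : seq I) (P : pred I) (G : I -> A) :
  (forall i, P i -> Sp (G i)) -> Sp (\sum_(i <- r | P i) G i).
Proof.
move=> H; apply: (big_ind Sp) => //; [exact: Sp_0|exact: Sp_D].
Qed.

Lemma prod_scale (I : Type) (r : seq I) (P : pred I) (cf : I -> F) (x : I -> A) :
  \prod_(i <- r | P i) (cf i *: x i) =
  (\prod_(i <- r | P i) cf i) *: \prod_(i <- r | P i) x i.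
Proof.
apply: (big_rec3 (fun a b d => a = b *: d)); first by rewrite scale1r.
by move=> i y1 y2 y3 _ ->; rewrite -scalerAl -scalerAr scalerA.
Qed.

Lemma prod_span (G : 'I_n -> A) : (forall a, S1 a (G a)) -> Sp (\prod_(a < n) G a).
Proof.
move=> H.
have [CF hCF] : exists CF : 'I_n -> 'I_4 * 'I_(2 * k) -> F,
    forall a, G a = \sum_p CF a p *: mono a p.
  exists (fun a => proj1_sig (constructive_indefinite_description _ (H a))).
  by move=> a; case: constructive_indefinite_description.
exists (fun t : Kt => \prod_(a < n) CF a (t a)).
rewrite (eq_bigr _ (fun a _ => hCF a)) bigA_distr_bigA /=.
by apply: eq_bigr => t _; rewrite prod_scale.
Qed.

Lemma left_mult (g : A) (b : 'I_n) (G : 'I_n -> A) :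
  (forall a, a != b -> exists s, SC g (G a) s) ->
  exists s : F, g * \prod_(a < n) G a =
    s *: \prod_(a < n) (if a == b then g * G a else G a).
Proof.
move=> H.
have key : forall m, (m <= n)%N -> exists s : F,
   g * \prod_(0 <= i < m) G (insubd b i) =
   s *: (\prod_(0 <= i < m) (if insubd b i == b then g * G (insubd b i) else G (insubd b i))
     * (if (m <= b)%N then g else 1)).
  elim=> [|m IH] hm.
    by exists 1; rewrite !big_nil scale1r mul1r mulr1.
  have [s hs] := IH (ltnW hm).
  rewrite !big_nat_recr //= mulrA hs -scalerAl.
  have im : ((insubd b m : 'I_n) : nat) = m by rewrite val_insubd hm.
  case: (ltngtP m b) => hmb.
  - have ne : (insubd b m : 'I_n) != b by rewrite -val_eqE /= im neq_ltn hmb.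
    have [s' hs'] := H _ ne.
    exists (s * s'); rewrite (negbTE ne) -(mulrA _ g) hs' -scalerAr scalerA mulrA.
    by [].
  - have ne : (insubd b m : 'I_n) != b by rewrite -val_eqE /= im neq_ltn hmb orbT.
    by exists s; rewrite (negbTE ne) !mulr1.
  - have e : (insubd b m : 'I_n) == b by rewrite -val_eqE /= im hmb.
    by exists s; rewrite e mulr1 mulrA.
have [s hs] := key n (leqnn n).
rewrite leqNgt ltn_ord mulr1 !big_mkord in hs.
have e1 : \prod_(i < n) G (insubd b i) = \prod_(a < n) G a.
  by apply: eq_bigr => i _; rewrite valKd.
have e2 : \prod_(i < n) (if insubd b i == b then g * G (insubd b i) else G (insubd b i))
   = \prod_(a < n) (if a == b then g * G a else G a).
  by apply: eq_bigr => i _; rewrite valKd.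
by exists s; rewrite -e1 -e2.
Qed.

Lemma Sp_left g b : (forall p, S1 b (g * mono b p)) ->
  (forall a, a != b -> forall p, exists s, SC g (mono a p) s) ->
  forall x, Sp x -> Sp (g * x).
Proof.
move=> h1 h2 x [cf ->]; rewrite mulr_sumr; apply: Sp_sum => t _.
rewrite -scalerAr; apply: Sp_Z.
have [s ->] := @left_mult g b (fun a => mono a (t a)) (fun a ne => h2 a ne (t a)).
apply: Sp_Z; apply: prod_span => a; case: eqP => [->|_]; [apply: h1|apply: S1_mono].
Qed.

Lemma Sp_1 : Sp 1.
Proof.
have <- : \prod_(a < n) (1 : A) = 1 by rewrite big1.
apply: prod_span => a.
have h0 : (0 < 2 * k)%N by rewrite muln_gt0.
have -> : (1 : A) = mono a (@Ordinal 4 0 isT, Ordinal h0) + mono a (@Ordinal 4 3 isT, Ordinal h0).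
  by rewrite /mono /= !expr0 !mulr1 (one_e a).
by apply: S1_D; apply: S1_mono.
Qed.

Lemma span_all (U : is_Clq q k psi psis om omi) x : Sp x.
Proof.
suff : forall y, Sp y -> Sp (x * y) by move/(_ 1 Sp_1); rewrite mulr1.
apply: (@clq_ind F A (fun x => forall y, Sp y -> Sp (x * y)) _ _ _ _ q n k psi psis om omi U) => {x}.
- by move=> y; rewrite mul1r.
- by move=> x z hx hz y hy; rewrite mulrDl; apply: Sp_D; [apply: hx|apply: hz].
- by move=> d x hx y hy; rewrite -scalerAl; apply: Sp_Z; apply: hx.
- by move=> x z hx hz y hy; rewrite -mulrA; apply: hx; apply: hz.
- by move=> b; apply: (Sp_left (S1_psi b)) => a ab; apply: SC_psi_cross.
- by move=> b; apply: (Sp_left (S1_psis b)) => a ab; apply: SC_psis_cross.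
- by move=> b; apply: (Sp_left (S1_om b)) => a ab; apply: SC_omb_cross.
- by move=> b; apply: (Sp_left (S1_omi b)) => a ab; apply: SC_omib_cross.
Qed.

Variables (z : F) (Hz : (2 * k).-primitive_root z) (U : is_Clq q k psi psis om omi).

Definition Ct := {ffun 'I_n -> 'I_(2 * k)}.
Definition wc (cc : Ct) (a : 'I_n) : F := z ^+ (cc a).
Lemma z1 : z ^+ (2 * k) = 1. Proof. exact: prim_expr_order Hz. Qed.
Lemma z_ne0 : z != 0.
Proof.
apply/eqP => e; have := z1; rewrite e expr0n muln_eq0 /= eqn0Ngt Hk /=.
by move/eqP; rewrite eq_sym oner_eq0.
Qed.
Lemma wc_ne0 cc a : wc cc a != 0. Proof. by rewrite expf_neq0 // z_ne0. Qed.
Lemma wc2 cc a : wc cc a ^+ (2 * k) = 1. Proof. by rewrite /wc exprAC z1 expr1n. Qed.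

Local Notation D := (dd n).+1.

Lemma fc_ex (cc : Ct) : exists g : A -> 'M[F]_D, is_alg_hom g /\
  forall a, [/\ g (psi a) = Psi k (wc cc) a, g (psis a) = Psis F a,
     g (om a) = Om q (wc cc) a & g (omi a) = Omi q (wc cc) a].
Proof. by case: U => _ /(_ _ _ _ _ _ (rep_rels Hq (wc_ne0 cc) (wc2 cc))) [[g hg] _]; exists g. Qed.

Definition fc (cc : Ct) : A -> 'M[F]_D :=
  proj1_sig (constructive_indefinite_description _ (fc_ex cc)).
Lemma fc_spec cc : is_alg_hom (fc cc) /\
  forall a, [/\ fc cc (psi a) = Psi k (wc cc) a, fc cc (psis a) = Psis F a,
     fc cc (om a) = Om q (wc cc) a & fc cc (omi a) = Omi q (wc cc) a].
Proof. by rewrite /fc; case: constructive_indefinite_description. Qed.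
Lemma fc_hom cc : is_alg_hom (fc cc). Proof. by case: (fc_spec cc). Qed.
Lemma fc_psi cc a : fc cc (psi a) = Psi k (wc cc) a.
Proof. by case: (fc_spec cc) => _ /(_ a) []. Qed.
Lemma fc_psis cc a : fc cc (psis a) = Psis F a.
Proof. by case: (fc_spec cc) => _ /(_ a) []. Qed.
Lemma fc_om cc a : fc cc (om a) = Om q (wc cc) a.
Proof. by case: (fc_spec cc) => _ /(_ a) []. Qed.

Lemma fc_e0 cc a : fc cc (e0 a) = mm (bz n) (fun t => if t a then 0 else 1).
Proof. by rewrite /e0 /u !(hM (fc_hom cc)) fc_psi fc_psis (E0m (wc2 cc)). Qed.
Lemma fc_e1 cc a : fc cc (e1 a) = mm (bz n) (fun t => if t a then 1 else 0).
Proof. by rewrite /e1 /v !(hM (fc_hom cc)) fc_psi fc_psis (E1m (wc2 cc)). Qed.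

Definition Zel a := e0 a * om a + q *: (e1 a * om a).
Lemma fc_Z cc a : fc cc (Zel a) = (wc cc a)%:M.
Proof.
rewrite /Zel (hD (fc_hom cc)) (hZ (fc_hom cc)) !(hM (fc_hom cc)) fc_om fc_psi fc_psis.
exact: (Zm Hq (wc2 cc)).
Qed.

Lemma prod_scalar (I : Type) (r : seq I) (P : pred I) (g : I -> F) :
  \prod_(i <- r | P i) (g i)%:M = (\prod_(i <- r | P i) g i)%:M :> 'M[F]_D.
Proof.
elim: r => [|i r IH]; first by rewrite !big_nil.
by rewrite !big_cons; case: (P i); rewrite IH // scalar_mxM.
Qed.

Lemma zne (j l : 'I_(2 * k)) : l != j -> z ^+ j - z ^+ l != 0.
Proof.
move=> lj; rewrite subr_eq0 (eq_prim_root_expr Hz) !modn_small //.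
by rewrite eq_sym.
Qed.

Definition Lel a (j : 'I_(2 * k)) :=
  \prod_(l < 2 * k | l != j) ((z ^+ j - z ^+ l)^-1 *: (Zel a - z ^+ l *: 1)).
Lemma fc_L cc a j : fc cc (Lel a j) = ((cc a == j)%:R)%:M.
Proof.
rewrite /Lel (hprod (fc_hom cc)).
rewrite (eq_bigr (fun l : 'I_(2 * k) => ((z ^+ j - z ^+ l)^-1 * (wc cc a - z ^+ l))%:M)); last first.
  move=> l _; rewrite (hZ (fc_hom cc)) (hB (fc_hom cc)) (hZ (fc_hom cc)) (h1 (fc_hom cc)) fc_Z.
  apply/matrixP => i i'; rewrite !mxE; case: (i == i'); rewrite /= ?mulr1n ?mulr0n; ring.
rewrite prod_scalar; congr (_%:M).
case: (cc a =P j) => [e|ne].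
  by rewrite big1 // => l lj; rewrite /wc e mulVf // zne.
rewrite (bigD1 (cc a)) /=; last by apply/eqP.
by rewrite /wc subrr mulr0 mul0r.
Qed.

Lemma prod_eqR (T : eqType) (f g : {ffun 'I_n -> T}) :
  \prod_(a < n) ((f a == g a)%:R : F) = (f == g)%:R.
Proof.
case: (f =P g) => [->|h]; first by rewrite big1 // => a _; rewrite eqxx.
case/boolP: [exists a, f a != g a] => [/existsP [a ha]|/existsPn H]; last first.
  by exfalso; apply: h; apply/ffunP => a; apply/eqP; move: (H a); rewrite negbK.
by rewrite (bigD1 a) //= (negbTE ha) mul0r.
Qed.

Definition Cel (c0 : Ct) := \prod_(a < n) Lel a (c0 a).
Lemma fc_C cc c0 : fc cc (Cel c0) = ((cc == c0)%:R)%:M.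
Proof.
rewrite /Cel (hprod (fc_hom cc)) (eq_bigr _ (fun a _ => fc_L cc a (c0 a))).
by rewrite prod_scalar prod_eqR.
Qed.

Definition Pel (s : Bits n) := \prod_(a < n) (if s a then e1 a else e0 a).
Lemma fc_P cc s : fc cc (Pel s) = mm (bz n) (fun x => (x == s)%:R).
Proof.
rewrite /Pel (hprod (fc_hom cc)) -prod_ind_eq; apply: eq_bigr => a _.
by case: (s a); rewrite ?fc_e0 ?fc_e1; apply: mm_eq.
Qed.

Definition Yel (s t : Bits n) := \prod_(a < n) (if s a != t a then psi a + psis a else 1).
Lemma fc_Y cc s t : fc cc (Yel s t) =
  \prod_(a < n) (if s a != t a then Psi k (wc cc) a + Psis F a else 1).
Proof.
rewrite /Yel (hprod (fc_hom cc)); apply: eq_bigr => a _.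
by case: ifP => _; rewrite ?(hD (fc_hom cc)) ?fc_psi ?fc_psis ?(h1 (fc_hom cc)).
Qed.

Lemma surj_unit (c0 : Ct) (s t : 'I_D) :
  exists x, forall cc, fc cc x = if cc == c0 then delta_mx s t else 0.
Proof.
pose X := Cel c0 * (Pel (idx s) * Yel (idx s) (idx t) * Pel (idx t)).
have key : forall cc, exists G : Bits n -> F, G (idx t) != 0 /\
    fc cc X = ((cc == c0)%:R)%:M * (G (idx t) *: delta_mx s t).
  move=> cc; have [G [hG e]] := Ym k (wc_ne0 cc) (idx s) (idx t).
  exists G; split => //.
  rewrite /X !(hM (fc_hom cc)) fc_C !fc_P fc_Y e corner !idxK.
  by [].
have [G0 [hG0 e0]] := key c0.
exists ((G0 (idx t))^-1 *: X) => cc.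
rewrite (hZ (fc_hom cc)).
case: (cc =P c0) => [->|ne].
  by rewrite e0 eqxx mul1r scalerA mulVf // scale1r.
have [G [_ ->]] := key cc; rewrite (introF eqP ne) /= ?mulr0n -scalemx1 scale0r mul0r scaler0.
by [].
Qed.

Lemma surj (M : Ct -> 'M[F]_D) : exists x, forall cc, fc cc x = M cc.
Proof.
have hx : forall c0 s t, exists x, forall cc, fc cc x = if cc == c0 then delta_mx s t else 0.
  exact: surj_unit.
pose xs c0 s t := proj1_sig (constructive_indefinite_description _ (hx c0 s t)).
have hxs : forall c0 s t cc, fc cc (xs c0 s t) = if cc == c0 then delta_mx s t else 0.
  by move=> c0 s t; rewrite /xs; case: constructive_indefinite_description.
exists (\sum_(c0 : Ct) \sum_(s < D) \sum_(t < D) M c0 s t *: xs c0 s t) => cc.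
rewrite (hsum (fc_hom cc)) (bigD1 cc) //= [X in _ + X]big1 ?addr0; last first.
  move=> c0 ne; rewrite (hsum (fc_hom cc)) big1 // => s _.
  rewrite (hsum (fc_hom cc)) big1 // => t _.
  by rewrite (hZ (fc_hom cc)) hxs eq_sym (negbTE ne) scaler0.
rewrite (hsum (fc_hom cc)) [RHS]matrix_sum_delta; apply: eq_bigr => s _.
rewrite (hsum (fc_hom cc)); apply: eq_bigr => t _.
by rewrite (hZ (fc_hom cc)) hxs eqxx.
Qed.

Lemma cardCt : #|{: Ct}| = ((2 * k) ^ n)%N.
Proof. by rewrite card_ffun !card_ord. Qed.
Lemma cardKt : #|{: Kt}| = (#|{: Ct}| * (D * D))%N.
Proof.
rewrite cardCt -(@cardB n) (@cardB2 n) card_ffun card_prod !card_ord.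
by rewrite -!expnMn mulnC.
Qed.

Lemma inj x x' : (forall cc, fc cc x = fc cc x') -> x = x'.
Proof.
move=> hx.
pose N := #|{: Kt}|.
pose Y (t : Kt) : {ffun Ct -> 'M[F]_D} := [ffun cc => fc cc (T t)].
pose X := [tuple Y (enum_val i) | i < N].
have sumY : forall cf : Kt -> F, \sum_t cf t *: Y t = [ffun cc => fc cc (\sum_t cf t *: T t)].
  move=> cf; apply/ffunP => cc; rewrite sum_ffunE ffunE (hsum (fc_hom cc)).
  by apply: eq_bigr => t _; rewrite !ffunE (hZ (fc_hom cc)).
have spanX : (<<X>> = fullv)%VS.
  apply/eqP; rewrite eqEsubv subvf /=; apply/subvP => v _.
  have [y hy] := surj (fun cc => v cc).
  have [cf ey] := span_all U y.
  have -> : v = \sum_t cf t *: Y t.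
    by rewrite sumY -ey; apply/ffunP => cc; rewrite ffunE hy.
  apply: memv_suml => t _; apply: memvZ; apply: memv_span.
  apply/(nthP 0); exists (enum_rank t); first by rewrite size_tuple card_ord.
  by rewrite (nth_mktuple _ 0 (enum_rank t)) /Y enum_rankK.
have freeX : free X.
  by rewrite /free spanX dimvf size_tuple /N cardKt.
move/freeP: freeX => fX.
have [cf e] := span_all U (x - x').
have h0 := fX (fun i => cf (enum_val i)).
have cf0 : forall t, cf t = 0.
  move=> t; rewrite -(enum_rankK t); apply: h0.
  have -> : \sum_(i < N) cf (enum_val i) *: X`_i = \sum_t cf t *: Y t.
    rewrite (eq_bigr (fun i : 'I_N => cf (enum_val i) *: Y (enum_val i))); last first.
      by move=> i _; rewrite (nth_mktuple _ 0 i).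
    rewrite /N -(big_enum_val (A := {: Kt}) (fun t => cf t *: Y t)).
    by apply: eq_bigl => t'; rewrite inE.
  rewrite sumY -e; apply/ffunP => cc; rewrite !ffunE (hB (fc_hom cc)) hx subrr.
  by [].
by apply/eqP; rewrite -subr_eq0 e big1 // => t _; rewrite cf0 scale0r.
Qed.

Lemma semisimple_A : semisimple_ring A.
Proof. exact: (semisimple_transfer fc_hom inj surj). Qed.

Definition dec (i : 'I_((2 * k) ^ n)) : Ct := enum_val (cast_ord (esym cardCt) i).
Definition enc (cc : Ct) : 'I_((2 * k) ^ n) := cast_ord cardCt (enum_rank cc).
Lemma decK : cancel dec enc.
Proof. by move=> i; rewrite /dec /enc enum_valK cast_ordKV. Qed.
Lemma encK : cancel enc dec.
Proof. by move=> cc; rewrite /dec /enc cast_ordK enum_rankK. Qed.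

Lemma iso_A : iso_to_sum_of_matrix_algebras A ((2 * k) ^ n) (2 ^ n).
Proof.
have -> : (2 ^ n)%N = D by rewrite -(@cardB2 n) cardB.
exists (fun i => fc (dec i)).
split; first by move=> i; apply: hD; apply: fc_hom.
split; first by move=> i; apply: hZ; apply: fc_hom.
split; first by move=> i x y; rewrite (hM (fc_hom _)).
split; first by move=> i; rewrite (h1 (fc_hom _)).
split.
  by move=> x y h; apply: inj => cc; rewrite -(encK cc); apply: h.
move=> M; have [x hx] := surj (fun cc => M (enc cc)).
by exists x => i; rewrite hx decK.
Qed.

End Alg.


Theorem theorem4p5 (F : fieldType) (q : F) (n k : nat)
    (A : algType F) (psi psis om omi : 'I_n -> A) :
  ~~ (2%N \in [pchar F]) -> q != 0 -> (0 < n)%N -> (0 < k)%N ->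
  is_Clq q k psi psis om omi ->
  (exists z : F, (2 * k)%N.-primitive_root z) ->
  semisimple_ring A /\
  iso_to_sum_of_matrix_algebras A ((2 * k) ^ n)%N (2 ^ n)%N.
Proof.
move=> hch Hq _ Hk U [z Hz].
have H2 : (2%:R : F) != 0.
  by apply: contra hch => h; rewrite inE /= h.
have Hrel := U.1.
split; [exact: (semisimple_A Hrel H2 Hq Hk Hz U)|exact: (iso_A Hrel H2 Hq Hk Hz U)].
Qed.
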